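(* Let $\{x_k\}$ be an infinite sequence generated by the Subgradient-InexP method (with any positive stepsizes $t_k$), under the standing assumptions, and let $\nu:=\frac{1+2\bar\gamma}{1-2\bar\lambda}$. Then for every $x\in C$ and every $k=0,1,\dots$, $$\|x_{k+1}-x\|^2\le\|x_k-x\|^2+\nu t_k^2\|s_k\|^2-2t_k\big[f(x_k)-f(x)-\epsilon_k\big].$$
   Context: Problem: minimize a convex function $f:\mathbb{R}^n\to\mathbb{R}$ over a nonempty closed convex set $C\subset\mathbb{R}^n$. For $\epsilon\ge0$, $\partial_\epsilon f(x):=\{s\in\mathbb{R}^n: f(y)\ge f(x)+\langle s,y-x\rangle-\epsilon\ \forall y\in\mathbb{R}^n\}$; $\partial f=\partial_0 f$. A relative error tolerance function with forcing parameters $\gamma,\theta,\lambda\ge0$ is any $\varphi_{\gamma,\theta,\lambda}:(\mathbb{R}^n)^3\to[0,\infty)$ with $\varphi_{\gamma,\theta,\lambda}(u,v,w)\le\gamma\|v-u\|^2+\theta\|w-v\|^2+\lambda\|w-u\|^2$. For $u\in C$, $\mathcal{P}_C(\varphi_{\gamma,\theta,\lambda},u,v):=\{w\in C:\langle v-w,z-w\rangle\le\varphi_{\gamma,\theta,\lambda}(u,v,w)\ \forall z\in C\}$. Subgradient-InexP method: given nonnegative sequences $\{\epsilon_k\},\{\gamma_k\},\{\theta_k\},\{\lambda_k\}$ and $x_0\in C$, at iteration $k$: if $0\in\partial f(x_k)$ stop; otherwise choose a nonzero $s_k\in\partial_{\epsilon_k}f(x_k)$, a stepsize $t_k>0$,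 and any $x_{k+1}\in\mathcal{P}_C(\varphi_{\gamma_k,\theta_k,\lambda_k},x_k,x_k-t_ks_k)$ (for some relative error tolerance functions $\varphi_{\gamma_k,\theta_k,\lambda_k}$). Standing assumptions: there exist $\bar\gamma\ge0$ and $\bar\theta,\bar\lambda\in[0,1/2)$ with $\gamma_k\in[0,\bar\gamma)$, $\theta_k\in[0,\bar\theta)$, $\lambda_k\in[0,\bar\lambda)$ for all $k$, and the generated sequence is infinite. *)

(* Defs.v *)
From HB Require Import structures.
From mathcomp Require Import all_boot all_order all_algebra.
From mathcomp Require Import all_classical all_reals all_analysis.
Set Implicit Arguments. Unset Strict Implicit. Unset Printing Implicit Defensive.
Import Order.TTheory GRing.Theory Num.Theory.
Import numFieldTopology.Exports.
Local Open Scope ring_scope.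
Local Open Scope classical_set_scope.

Section Defs.
Variables (R : realType) (n : nat).
Notation V := 'rV[R]_n.

Definition dotp (u v : V) : R := \sum_(i < n) u ord0 i * v ord0 i.
Definition enorm (u : V) : R := Num.sqrt (dotp u u).

Definition convex_setRn (C : set V) : Prop :=
  forall x y (a : R), C x -> C y -> 0 <= a <= 1 -> C (a *: x + (1 - a) *: y).

Definition convex_funRn (f : V -> R) : Prop :=
  forall x y (a : R), 0 <= a <= 1 ->
    f (a *: x + (1 - a) *: y) <= a * f x + (1 - a) * f y.

Definition eps_subdiff (f : V -> R) (eps : R) (x : V) : set V :=
  [set s | forall y, f y >= f x + dotp s (y - x) - eps].
Definition subdiff (f : V -> R) (x : V) : set V := eps_subdiff f 0 x.

Definition rel_err_tol (gamma theta lambda : R) (phi : V -> V -> V -> R) : Prop :=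
  forall u v w, 0 <= phi u v w /\
    phi u v w <= gamma * enorm (v - u) ^+ 2 + theta * enorm (w - v) ^+ 2
                 + lambda * enorm (w - u) ^+ 2.

Definition inexP (C : set V) (phi : V -> V -> V -> R) (u v : V) : set V :=
  [set w | C w /\ forall z, C z -> dotp (v - w) (z - w) <= phi u v w].
End Defs.

(* Main.v *)
Require Import Defs.
From HB Require Import structures.
From mathcomp Require Import all_boot all_order all_algebra.
From mathcomp Require Import all_classical all_reals all_analysis.
From mathcomp Require Import ring lra.
Import Order.TTheory GRing.Theory Num.Theory.
Import numFieldTopology.Exports.
Local Open Scope ring_scope.
Local Open Scope classical_set_scope.

Set Implicit Arguments. Unset Strict Implicit.
Section D.
Variables (R : realType) (n : nat).
Implicit Types u v w : 'rV[R]_n.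
Lemma dotpC u v : dotp u v = dotp v u.
Proof. by rewrite /dotp; apply: eq_bigr => i _; rewrite mulrC. Qed.
Lemma dotpDl u v w : dotp (u + v) w = dotp u w + dotp v w.
Proof. by rewrite /dotp -big_split; apply: eq_bigr => i _; rewrite mxE mulrDl. Qed.
Lemma dotpZl (a : R) u v : dotp (a *: u) v = a * dotp u v.
Proof. by rewrite /dotp mulr_sumr; apply: eq_bigr => i _; rewrite mxE mulrA. Qed.
Lemma dotpNl u v : dotp (- u) v = - dotp u v.
Proof. by rewrite -scaleN1r dotpZl mulN1r. Qed.
Lemma dotpDr u v w : dotp w (u + v) = dotp w u + dotp w v.
Proof. by rewrite dotpC dotpDl !(dotpC w). Qed.
Lemma dotpZr (a : R) u v : dotp v (a *: u) = a * dotp v u.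
Proof. by rewrite dotpC dotpZl dotpC. Qed.
Lemma dotpNr u v : dotp v (- u) = - dotp v u.
Proof. by rewrite dotpC dotpNl dotpC. Qed.
Lemma dotp_ge0 u : 0 <= dotp u u.
Proof. by rewrite /dotp; apply: sumr_ge0 => i _; rewrite -expr2 sqr_ge0. Qed.
Lemma enorm_sq u : enorm u ^+ 2 = dotp u u.
Proof. by rewrite /enorm sqr_sqrtr // dotp_ge0. Qed.
End D.
Lemma real_key0 (R : realType) (D T Q tds tas ad g th l gb lb ph a : R) :
  0 <= T -> 0 <= D -> 0 <= Q -> Q = D + 2 * tds + T ->
  0 <= g -> g < gb -> 0 <= th -> th < 1/2 -> 0 <= l -> l < lb -> lb < 1/2 ->
  tas + tds + ad + D <= ph -> tds + D <= ph ->
  ph <= g * T + th * Q + l * D ->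
  a <= tas ->
  2 * ad + D <= (1 + 2 * gb) / (1 - 2 * lb) * T - 2 * a.
Proof.
move=> T0 D0 Q0 hQ g0 ggb th0 th1 l0 llb lb1 h1 h2 hb hs.
have hD : (1 - 2 * l) * D <= (1 + 2 * g) * T - (1 - 2 * th) * Q.
  have e1 : (1 - 2 * l) * D = D - 2 * (l * D) by ring.
  have e2 : (1 + 2 * g) * T - (1 - 2 * th) * Q = T + 2 * (g * T) - Q + 2 * (th * Q) by ring.
  rewrite e1 e2; lra.
set B := (1 + 2 * g) * T - (1 - 2 * th) * Q.
have hBD : (1 - 2 * l) * (B + 2 * l * D) <= B.
  have : 2 * l * ((1 - 2 * l) * D) <= 2 * l * B.
    by rewrite ler_wpM2l // mulr_ge0 //; lra.
  have e : (1 - 2 * l) * (B + 2 * l * D) = (1 - 2 * l) * B + 2 * l * ((1 - 2 * l) * D) by ring.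
  rewrite e. have e' : (1 - 2 * l) * B = B - 2 * l * B by ring. rewrite e'. lra.
have hB : B <= (1 + 2 * g) * T.
  have : 0 <= (1 - 2 * th) * Q by apply: mulr_ge0 => //; lra.
  rewrite /B; lra.
have hl : 0 < 1 - 2 * l by lra.
have hlb : 0 < 1 - 2 * lb by lra.
have hBD2 : B + 2 * l * D <= (1 + 2 * g) * T / (1 - 2 * l).
  rewrite ler_pdivlMr // mulrC. lra.
have hnu : (1 + 2 * g) * T / (1 - 2 * l) <= (1 + 2 * gb) / (1 - 2 * lb) * T.
  rewrite [X in _ <= X]mulrAC ler_pdivrMr // [X in _ <= X]mulrAC ler_pdivlMr //.
  have H : (1 + 2 * g) * (1 - 2 * lb) <= (1 + 2 * gb) * (1 - 2 * l) by nra.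
  have e1 : (1 + 2 * g) * T * (1 - 2 * lb) = T * ((1 + 2 * g) * (1 - 2 * lb)) by ring.
  have e2 : (1 + 2 * gb) * T * (1 - 2 * l) = T * ((1 + 2 * gb) * (1 - 2 * l)) by ring.
  by rewrite e1 e2 ler_wpM2l.
have : 2 * ad + D <= B + 2 * l * D - 2 * tas.
  have e2 : B = T + 2 * (g * T) - Q + 2 * (th * Q) by rewrite /B; ring.
  have e3 : 2 * l * D = 2 * (l * D) by ring.
  rewrite e2 e3; lra.
lra.
Qed.

Theorem mainTheorem2 (R : realType) (n : nat)
  (f : 'rV[R]_n -> R) (C : set 'rV[R]_n)
  (x s : nat -> 'rV[R]_n) (t eps gamma theta lambda : nat -> R)
  (phi : nat -> 'rV[R]_n -> 'rV[R]_n -> 'rV[R]_n -> R)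
  (gbar thbar lbar : R) :
  convex_funRn f ->
  C !=set0 -> closed C -> convex_setRn C ->
  (* standing assumptions on the forcing parameters *)
  0 <= gbar -> 0 <= thbar < 1/2 -> 0 <= lbar < 1/2 ->
  (forall k, 0 <= gamma k < gbar) ->
  (forall k, 0 <= theta k < thbar) ->
  (forall k, 0 <= lambda k < lbar) ->
  (forall k, 0 <= eps k) ->
  (* Subgradient-InexP iteration, generating an infinite sequence *)
  C (x 0%N) ->
  (forall k, ~ subdiff f (x k) 0) ->
  (forall k, s k != 0 /\ eps_subdiff f (eps k) (x k) (s k)) ->
  (forall k, 0 < t k) ->
  (forall k, rel_err_tol (gamma k) (theta k) (lambda k) (phi k)) ->
  (forall k, inexP C (phi k) (x k) (x k - t k *: s k) (x k.+1)) ->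
  let nu := (1 + 2 * gbar) / (1 - 2 * lbar) in
  forall z, C z -> forall k : nat,
    enorm (x k.+1 - z) ^+ 2 <=
      enorm (x k - z) ^+ 2 + nu * t k ^+ 2 * enorm (s k) ^+ 2
      - 2 * t k * (f (x k) - f z - eps k).
Proof.
move=> _ _ _ _ _ /andP[thb0 thb1] /andP[lb0 lb1] hg hth hl _ C0 _ hs ht herr hP nu z Cz k.
have /andP[g0 ggb] := hg k.
have /andP[th0 thth] := hth k.
have /andP[l0 llb] := hl k.
have [_ hsub] := hs k.
have [_ hproj] := hP k.
have [ph0 hb] := herr k (x k) (x k - t k *: s k) (x k.+1).
have tk := ht k.
set u := x k in hsub hproj hb ph0 *.
set w := x k.+1 in hproj hb ph0 *.
set sk := s k in hsub hproj hb ph0 *.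
set tt := t k in hproj hb ph0 tk *.
set ph := phi k u (u - tt *: sk) w in hproj hb ph0.
have Cu : C u by rewrite /u; case: (k) => [|k']; [exact: C0 | exact: (hP k').1].
have h1 := hproj z Cz.
have h2 := hproj u Cu.
have hs1 := hsub z.
set a := u - z. set d := w - u.
have E1 : w - z = a + d by rewrite /a /d; apply/rowP=> i; rewrite !mxE; ring.
have E2 : u - tt *: sk - w = - (d + tt *: sk) by rewrite /d; apply/rowP=> i; rewrite !mxE; ring.
have E3 : z - w = - (a + d) by rewrite /a /d; apply/rowP=> i; rewrite !mxE; ring.
have E4 : u - w = - d by rewrite /d; apply/rowP=> i; rewrite !mxE; ring.
have E5 : u - tt *: sk - u = - (tt *: sk) by apply/rowP=> i; rewrite !mxE; ring.
have E6 : w - (u - tt *: sk) = d + tt *: sk by rewrite /d; apply/rowP=> i; rewrite !mxE; ring.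
have E7 : z - u = - a by rewrite /a; apply/rowP=> i; rewrite !mxE; ring.
rewrite E2 E3 in h1. rewrite E2 E4 in h2. rewrite E7 in hs1.
rewrite E5 E6 -/d in hb.
rewrite E1 -/a !enorm_sq in hb *.
have Q0 := dotp_ge0 (d + tt *: sk).
have D0 := dotp_ge0 d. have S0 := dotp_ge0 sk.
clearbody a d.
rewrite !(dotpDl, dotpDr, dotpNl, dotpNr, dotpZl, dotpZr) in h1 h2 hs1 hb Q0 *.
rewrite ?(dotpC d a, dotpC sk a, dotpC sk d) in h1 h2 hs1 hb Q0 *.
have T0 : 0 <= tt ^+ 2 * dotp sk sk by rewrite mulr_ge0 // sqr_ge0.
have hs2 : tt * (f u - f z - eps k) <= tt * dotp a sk.
  by rewrite ler_pM2l //; lra.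
have := @real_key0 R (dotp d d) (tt^+2 * dotp sk sk)
  (dotp d d + 2 * (tt * dotp d sk) + tt^+2 * dotp sk sk)
  (tt * dotp d sk) (tt * dotp a sk) (dotp a d) (gamma k) (theta k) (lambda k)
  gbar lbar ph (tt * (f u - f z - eps k)) T0 D0 _ erefl g0 ggb th0 _ l0 llb lb1.
have lt1 : theta k < 1/2 by apply: lt_le_trans thth _; exact: ltW.
rewrite /nu.
move=> H.
have eQ : dotp d d + tt * dotp d sk + (tt * dotp d sk + tt * (tt * dotp sk sk))
  = dotp d d + 2 * (tt * dotp d sk) + tt ^+ 2 * dotp sk sk by ring.
have eg : gamma k * - (tt * - (tt * dotp sk sk)) = gamma k * (tt ^+ 2 * dotp sk sk) by ring.
rewrite eQ eg in hb Q0.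
have H' := H Q0 lt1 ltac:(lra) ltac:(lra) hb hs2.
have e3 : (1 + 2 * gbar) / (1 - 2 * lbar) * tt ^+ 2 * dotp sk sk =
  (1 + 2 * gbar) / (1 - 2 * lbar) * (tt ^+ 2 * dotp sk sk) by ring.
rewrite e3; lra.
Qed.
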